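(* For an integer $n\ge 0$ let $\Omega_n$ be the set of integer pairs $(p,q)$ with $0\le p\le n$, $0\le q\le n$, $(p,q)\ne(n,n)$, and let $\mathcal A_n$ be the linear span (over $\mathbb C$) of the rational functions $\frac{z^p\,\overline z^{\,q}}{(z-\overline z)^n}$, $(p,q)\in\Omega_n$, regarded as functions on the upper half-plane $\Lambda=\{z:\operatorname{Im}z>0\}$. Let $\mathcal A=\sum_{n\ge0}\mathcal A_n$. Consider the six operators $$\frac{\partial}{\partial z},\quad z\frac{\partial}{\partial z},\quad z^2\frac{\partial}{\partial z},\quad \frac{\partial}{\partial \overline z},\quad \overline z\frac{\partial}{\partial \overline z},\quad \overline z^{\,2}\frac{\partial}{\partial \overline z}.$$ Then: (a) $\mathcal A$ is invariant under each of these six operators; (b) the function $\frac{1}{z-\overline z}$ is cyclic in $\mathcal A$ for this family, i.e. the linear span of all functions obtained by applying finite products of these six operators (including the empty product) to $\frac1{z-\overline z}$ is equal to $\mathcal A$.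
   Context: $\frac{\partial}{\partial z}$, $\frac{\partial}{\partial\overline z}$ are the Wirtinger derivatives, $z$ and $\overline z$ are treated as independent variables in these rational functions. *)

(* Defs.v *)
(* formal rational functions in two independent variables
   z and zb (= \overline z), over a field F of characteristic 0
   (instantiated by the complex numbers). *)
From HB Require Import structures.
From mathcomp Require Import all_boot all_order all_algebra.
From mathcomp Require Export fraction.
Set Implicit Arguments. Unset Strict Implicit. Unset Printing Implicit Defensive.
Import Order.TTheory GRing.Theory Num.Theory.
Local Open Scope ring_scope.

Notation "x %:F" := (@FracField.tofrac _ x).

Section Defs.
Variable F : numClosedFieldType.

(* Bivariate polynomials: outer variable is z, inner variable is zb. *)
Definition Pol := {poly {poly F}}.
Definition RF := {fraction Pol}.

Definition zP : Pol := 'X.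
Definition zbP : Pol := ('X)%:P.
Definition zR : RF := (zP)%:F.
Definition zbR : RF := (zbP)%:F.
Definition cst (c : F) : RF := ((c%:P)%:P : Pol)%:F.

Definition dzP (p : Pol) : Pol := p^`().
Definition dzbP (p : Pol) : Pol := map_poly (fun c : {poly F} => c^`()) p.

(* extension to rational functions by the quotient rule
   (independent of the chosen representative) *)
Definition quot_deriv (d : Pol -> Pol) (f : RF) : RF :=
  let r := repr f in
  (d \n_r * \d_r - \n_r * d \d_r)%:F / ((\d_r) ^+ 2)%:F.

Definition dz : RF -> RF := quot_deriv dzP.
Definition dzb : RF -> RF := quot_deriv dzbP.

Definition Omega (n p q : nat) : bool :=
  [&& (p <= n)%N, (q <= n)%N & ~~ ((p == n) && (q == n))].

Definition gen (n p q : nat) : RF := zR ^+ p * zbR ^+ q / (zR - zbR) ^+ n.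

Definition inA (f : RF) : Prop :=
  exists s : seq (F * (nat * nat * nat)),
    all (fun t => Omega t.2.1.1 t.2.1.2 t.2.2) s /\
    f = \sum_(t <- s) cst t.1 * gen t.2.1.1 t.2.1.2 t.2.2.

Definition op (i : 'I_6) (f : RF) : RF :=
  match val i with
  | 0 => dz f
  | 1 => zR * dz f
  | 2 => zR ^+ 2 * dz f
  | 3 => dzb f
  | 4 => zbR * dzb f
  | _ => zbR ^+ 2 * dzb f
  end.

(* apply a finite product of operators (a word; [::] = identity) *)
Definition apply_word (w : seq 'I_6) (f : RF) : RF := foldr op f w.

Definition in_span_orbit (g f : RF) : Prop :=
  exists s : seq (F * seq 'I_6), f = \sum_(t <- s) cst t.1 * apply_word t.2 g.

End Defs.

(* Main.v *)
Require Import Defs.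
From mathcomp Require Import all_boot all_order all_algebra.
From mathcomp Require Import ring zify.
Import GRing.Theory Num.Theory.
Local Open Scope ring_scope.
Set Implicit Arguments. Unset Strict Implicit.

Lemma fracE (R : idomainType) (f : {fraction R}) :
  f = (\n_(repr f))%:F / (\d_(repr f))%:F.
Proof.
have Hd : (\d_(repr f)) != 0 by apply: denom_ratioP.
apply: (mulIf (x:= (\d_(repr f))%:F)); first by rewrite tofrac_eq0.
rewrite mulfVK ?tofrac_eq0 //.
rewrite -[f in LHS]reprK.
unlock tofrac.
rewrite -[_ * _]/(FracField.mul _ _) !piE.
apply/eqmodP; rewrite /= FracField.equivfE /= reprK /FracField.mulf.
rewrite !numden_Ratio ?oner_neq0 ?mulf_neq0 //.
apply/eqP; ring.
all: exact: oner_neq0.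
Qed.

Lemma fracEx (R : idomainType) (f : {fraction R}) :
  exists a b, b != 0 /\ f = a%:F / b%:F.
Proof. exists (\n_(repr f)), (\d_(repr f)); split; [exact: denom_ratioP | exact: fracE]. Qed.

Section Alg.
Variable K : fieldType.
Lemma alg0 (A B N D : K) : B != 0 -> D != 0 -> A / B = N / D -> A * D = N * B.
Proof. by move=> b0 d0 e; rewrite -(divfK b0 A) e; field; rewrite d0. Qed.

Lemma alg1 (A B N D dA dB dN dD : K) : B != 0 -> D != 0 -> A*D = N*B ->
  dA*D + A*dD = dN*B + N*dB -> (dN*D - N*dD)/D^+2 = (dA*B - A*dB)/B^+2.
Proof.
move=> b0 d0 e1 e2.
have hN : N = A * D / B by rewrite e1; field.
have hdN : dN = (dA * D + A * dD - N * dB) / B by rewrite e2; field.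
by rewrite hdN hN; field; rewrite b0 d0.
Qed.

Lemma alg2 (A B C E dA dB dC dE : K) : B != 0 -> E != 0 ->
 ((dA*E + A*dE + (dC*B + C*dB))*(B*E) - (A*E + C*B)*(dB*E + B*dE))/((B*E)*(B*E))
  = (dA*B - A*dB)/(B*B) + (dC*E - C*dE)/(E*E).
Proof. by move=> b0 e0; field; rewrite b0 e0. Qed.

Lemma alg3 (A B C E dA dB dC dE : K) : B != 0 -> E != 0 ->
 ((dA*C + A*dC)*(B*E) - (A*C)*(dB*E+B*dE))/((B*E)*(B*E))
  = (dA*B - A*dB)/(B*B) * (C/E) + (A/B) * ((dC*E - C*dE)/(E*E)).
Proof. by move=> b0 e0; field; rewrite b0 e0. Qed.

Lemma alg4 (A B dA dB : K) : A != 0 -> B != 0 ->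
  (dB*A - B*dA)/(A*A) = - ((dA*B - A*dB)/(B*B)) / (A/B)^+2.
Proof. by move=> a0 b0; field; rewrite a0 b0. Qed.
End Alg.

Section S.
Variable F : numClosedFieldType.
Local Notation Pol := (Pol F).
Local Notation RF := (RF F).

Definition isder (d : Pol -> Pol) :=
  (forall a b, d (a + b) = d a + d b) /\ (forall a b, d (a * b) = d a * b + a * d b).

Lemma dzP_der : isder (@dzP F).
Proof. by split => a b; rewrite /dzP ?derivD ?derivM. Qed.

Lemma dzbP_der : isder (@dzbP F).
Proof.
split => a b; rewrite /dzbP.
  by apply/polyP => i; rewrite coefD !coef_map /= coefD derivD.
apply/polyP => i; rewrite coefD !coef_map /= !coefM.
rewrite raddf_sum -big_split /=; apply: eq_bigr => j _.
by rewrite !coef_map /= derivM.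
Qed.

Lemma tofrac_inj (a b : Pol) : a%:F = b%:F :> RF -> a = b.
Proof. by move/eqP; rewrite tofrac_eq => /eqP. Qed.

Lemma tofrac_neq0 (b : Pol) : b != 0 -> b%:F != 0 :> RF.
Proof. by rewrite tofrac_eq0. Qed.

Lemma qd_frac d (Hd : isder d) (a b : Pol) : b != 0 ->
  quot_deriv d (a%:F / b%:F) = (d a * b - a * d b)%:F / (b ^+ 2)%:F.
Proof.
move=> b0; case: Hd => dD dM.
rewrite /quot_deriv.
set f := a%:F / b%:F.
set N := \n_(repr f); set D := \d_(repr f).
have D0 : D != 0 by apply: denom_ratioP.
have Ef : f = N%:F / D%:F by apply: fracE.
have E1 : a * D = N * b.
  apply: tofrac_inj; rewrite !tofracM.
  by apply: alg0; rewrite ?tofrac_neq0 // -Ef.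
have E2 := congr1 d E1.
rewrite !dM in E2.
have E1F := congr1 (@FracField.tofrac _) E1.
have E2F := congr1 (@FracField.tofrac _) E2.
rewrite !(tofracM, tofracD) in E1F E2F.
rewrite !(tofracM, tofracB, tofracXn).
by apply: alg1; rewrite ?tofrac_neq0.
Qed.
End S.

Section S2.
Variable F : numClosedFieldType.
Local Notation Pol := (Pol F).
Local Notation RF := (RF F).
Variable d : Pol -> Pol.
Hypothesis Hd : isder d.
Local Notation Dq := (quot_deriv d).

Lemma d0 : d 0 = 0.
Proof. case: Hd => dD _; apply: (addrI (d 0)). rewrite -dD. by rewrite !addr0. Qed.

Lemma d1 : d 1 = 0.
Proof. case: Hd => dD dM; have := dM 1 1; rewrite !mulr1 mul1r => h. by apply: (addrI (d 1)); rewrite addr0 -h. Qed.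

Lemma Dq_add (x y : RF) : Dq (x + y) = Dq x + Dq y.
Proof.
have [a [b [b0 ->]]] := fracEx x.
have [c [e [e0 ->]]] := fracEx y.
have bF := tofrac_neq0 b0; have eF := tofrac_neq0 e0.
rewrite (addf_div _ _ bF eF).
rewrite -!tofracM -tofracD.
have be0 : b * e != 0 by rewrite mulf_neq0.
rewrite !(qd_frac Hd) //.
case: Hd => dD dM.
rewrite dD !dM !(tofracM, tofracB, tofracXn, tofracD).
apply: alg2; [exact: bF | exact: eF].
Qed.

Lemma Dq_mul (x y : RF) : Dq (x * y) = Dq x * y + x * Dq y.
Proof.
have [a [b [b0 ->]]] := fracEx x.
have [c [e [e0 ->]]] := fracEx y.
have bF := tofrac_neq0 b0; have eF := tofrac_neq0 e0.
rewrite mulf_div -!tofracM.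
have be0 : b * e != 0 by rewrite mulf_neq0.
rewrite !(qd_frac Hd) //.
case: Hd => dD dM.
rewrite !dM !(tofracM, tofracB, tofracXn, tofracD).
apply: alg3; [exact: bF | exact: eF].
Qed.

Lemma Dq_tofrac (a : Pol) : Dq (a%:F) = (d a)%:F.
Proof.
have -> : a%:F = a%:F / 1%:F :> RF by rewrite tofrac1 divr1.
rewrite (qd_frac Hd) ?oner_neq0 //.
by rewrite d1 mulr0 subr0 mulr1 expr1n tofrac1 divr1.
Qed.

Lemma Dq0 : Dq 0 = 0.
Proof. by rewrite -tofrac0 Dq_tofrac d0 tofrac0. Qed.

Lemma Dq1 : Dq 1 = 0.
Proof. by rewrite -tofrac1 Dq_tofrac d1 tofrac0. Qed.

Lemma Dq_inv (x : RF) : Dq (x^-1) = - Dq x / x ^+ 2.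
Proof.
have [a [b [b0 ->]]] := fracEx x.
have [->|a0] := eqVneq a 0.
  by rewrite tofrac0 mul0r invr0 Dq0 oppr0 mul0r.
have bF := tofrac_neq0 b0; have aF := tofrac_neq0 a0.
rewrite invf_div !(qd_frac Hd) //.
rewrite !(tofracM, tofracB, tofracXn, tofracD).
apply: alg4; [exact: aF | exact: bF].
Qed.

Lemma Dq_exp (x : RF) n : Dq (x ^+ n) = n%:R * x ^+ n.-1 * Dq x.
Proof.
elim: n => [|n IH]; first by rewrite expr0 Dq1; ring.
rewrite exprS Dq_mul IH /=.
case: n IH => [|n] IH; first by rewrite !expr0; ring.
rewrite exprS; set X := x ^+ n; rewrite -!natr1; ring.
Qed.

Lemma Dq_opp (x : RF) : Dq (- x) = - Dq x.
Proof. by apply: (addrI (Dq x)); rewrite -Dq_add !subrr Dq0. Qed.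

End S2.

Section G.
Variable K : fieldType.
Variable D : K -> K.
Hypothesis Dadd : forall x y, D (x + y) = D x + D y.
Hypothesis Dmul : forall x y, D (x * y) = D x * y + x * D y.
Hypothesis Dinv : forall x, D (x^-1) = - D x / x ^+ 2.
Hypothesis Dexp : forall x n, D (x ^+ n) = n%:R * x ^+ n.-1 * D x.
Hypothesis Dopp : forall x, D (- x) = - D x.
Variables z zb : K.
Hypothesis u0 : z - zb != 0.
Definition g m p q := z ^+ p * zb ^+ q / (z - zb) ^+ m.

Lemma Dg m p q : D (g m p q) =
  p%:R * (z ^+ p.-1 * zb ^+ q / (z - zb) ^+ m) * D z
  + q%:R * (z ^+ p * zb ^+ q.-1 / (z - zb) ^+ m) * D zb
  - m%:R * g m.+1 p q * (D z - D zb).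
Proof.
rewrite /g !Dmul Dinv !Dexp Dadd Dopp.
case: m => [|k]; first by rewrite !expr0; ring.
set P := z ^+ p; set P' := z ^+ p.-1; set Q := zb ^+ q; set Q' := zb ^+ q.-1.
set dz := D z; set dzb := D zb.
have U0 : (z - zb) ^+ k != 0 by rewrite expf_neq0.
rewrite /= !exprS; set U := (z - zb) ^+ k; set u := z - zb.
field. by rewrite U0 u0.
Qed.

Lemma gR m p q : g m p q = g m.+1 p.+1 q - g m.+1 p q.+1.
Proof.
have U0 : (z - zb) ^+ m != 0 by rewrite expf_neq0.
rewrite /g !exprS; set U := (z - zb) ^+ m. set P := z ^+ p; set Q := zb ^+ q.
field. by rewrite U0 u0.
Qed.

Lemma gI1 : g 1 0 1 = g 3 2 1 - 2%:R * g 2 0 2 - g 3 0 3.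
Proof. rewrite /g; field; exact: u0. Qed.

Lemma gI2 : g 1 1 0 = g 2 2 0 - g 1 0 1 - g 2 0 2.
Proof. rewrite /g; field; exact: u0. Qed.

End G.

Section S3.
Variable F : numClosedFieldType.
Local Notation Pol := (Pol F).
Local Notation RF := (RF F).
Local Notation zR := (zR F).
Local Notation zbR := (zbR F).
Local Notation gen := (gen F).

Lemma uR : zR - zbR != 0.
Proof. by rewrite /zR /zbR -tofracB tofrac_eq0 /zP /zbP polyXsubC_eq0. Qed.

Lemma dz_zR : dz zR = 1.
Proof. by rewrite /dz /zR (Dq_tofrac (dzP_der F)) /dzP /zP derivX tofrac1. Qed.
Lemma dz_zbR : dz zbR = 0.
Proof. by rewrite /dz /zbR (Dq_tofrac (dzP_der F)) /dzP /zbP derivC tofrac0. Qed.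
Lemma dzb_zR : dzb zR = 0.
Proof.
rewrite /dzb /zR (Dq_tofrac (dzbP_der F)) /dzbP /zP.
have -> : map_poly (fun c : {poly F} => c^`()) 'X = 0.
  apply/polyP => i; rewrite coef_map /= coefX coef0.
  by case: eqP; rewrite ?deriv0 // -polyC1 derivC.
by rewrite tofrac0.
Qed.
Lemma dzb_zbR : dzb zbR = 1.
Proof.
rewrite /dzb /zbR (Dq_tofrac (dzbP_der F)) /dzbP /zbP.
by rewrite map_polyC /= derivX tofrac1.
Qed.
Lemma dz_cst (c : F) : dz (cst c) = 0.
Proof. by rewrite /dz /cst (Dq_tofrac (dzP_der F)) /dzP derivC tofrac0. Qed.
Lemma dzb_cst (c : F) : dzb (cst c) = 0.
Proof. by rewrite /dzb /cst (Dq_tofrac (dzbP_der F)) /dzbP map_polyC /= derivC tofrac0. Qed.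

Lemma dz_gen m p q : dz (gen m p q) = p%:R * gen m p.-1 q - m%:R * gen m.+1 p q.
Proof.
have := Dg (Dq_add (dzP_der F)) (Dq_mul (dzP_der F)) (Dq_inv (dzP_der F)) (Dq_exp (dzP_der F)) (Dq_opp (dzP_der F)) uR m p q.
rewrite /g /dz /gen => ->; have h1 := dz_zR; have h2 := dz_zbR; rewrite /dz in h1 h2 *; rewrite h1 h2 /gen; ring.
Qed.

Lemma dzb_gen m p q : dzb (gen m p q) = q%:R * gen m p q.-1 + m%:R * gen m.+1 p q.
Proof.
have := Dg (Dq_add (dzbP_der F)) (Dq_mul (dzbP_der F)) (Dq_inv (dzbP_der F)) (Dq_exp (dzbP_der F)) (Dq_opp (dzbP_der F)) uR m p q.
rewrite /g /dzb /gen => ->; have h1 := dzb_zR; have h2 := dzb_zbR; rewrite /dzb in h1 h2 *; rewrite h1 h2 /gen; ring.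
Qed.

Lemma genR m p q : gen m p q = gen m.+1 p.+1 q - gen m.+1 p q.+1.
Proof. exact: (gR uR). Qed.

Lemma zR_gen m p q : zR * (p%:R * gen m p.-1 q) = p%:R * gen m p q.
Proof. case: p => [|p]; rewrite /gen /= ?exprS; ring. Qed.
Lemma zbR_gen m p q : zbR * (q%:R * gen m p q.-1) = q%:R * gen m p q.
Proof. case: q => [|q]; rewrite /gen /= ?exprS; ring. Qed.
Lemma zR_gen1 m p q : zR * gen m p q = gen m p.+1 q.
Proof. rewrite /gen exprS; ring. Qed.
Lemma zbR_gen1 m p q : zbR * gen m p q = gen m p q.+1.
Proof. rewrite /gen exprS; ring. Qed.

End S3.

Section S4.
Variable F : numClosedFieldType.
Local Notation Pol := (Pol F).
Local Notation RF := (RF F).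
Local Notation zR := (zR F).
Local Notation zbR := (zbR F).
Local Notation gen := (gen F).

Lemma test_lia (n p q : nat) : Omega n p q -> (p < n \/ q < n)%N.
Proof. rewrite /Omega. lia. Qed.

Lemma cstM (a b : F) : cst (a * b) = cst a * cst b.
Proof. by rewrite /cst !polyCM tofracM. Qed.
Lemma cst1 : cst (1 : F) = 1.
Proof. by rewrite /cst !polyC1 tofrac1. Qed.
Lemma cst_nat k : cst (k%:R : F) = k%:R.
Proof. by rewrite /cst !rmorph_nat. Qed.
Lemma cstN1 : cst (-1 : F) = -1.
Proof. by rewrite /cst !rmorphN1. Qed.

Definition o0 : 'I_6 := @Ordinal 6 0 isT.
Definition o1 : 'I_6 := @Ordinal 6 1 isT.
Definition o2 : 'I_6 := @Ordinal 6 2 isT.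
Definition o3 : 'I_6 := @Ordinal 6 3 isT.
Definition o4 : 'I_6 := @Ordinal 6 4 isT.
Definition o5 : 'I_6 := @Ordinal 6 5 isT.

Lemma op0 m p q : op o0 (gen m p q) = p%:R * gen m p.-1 q - m%:R * gen m.+1 p q.
Proof. exact: dz_gen. Qed.
Lemma op1 m p q : op o1 (gen m p q) = p%:R * gen m p q - m%:R * gen m.+1 p.+1 q.
Proof. case: p => [|p]; rewrite /op /= dz_gen /gen /= !exprS; ring. Qed.
Lemma op2 m p q : op o2 (gen m p q) = p%:R * gen m p.+1 q - m%:R * gen m.+1 p.+2 q.
Proof. case: p => [|p]; rewrite /op /= dz_gen /gen /= !exprS; ring. Qed.
Lemma op3 m p q : op o3 (gen m p q) = q%:R * gen m p q.-1 + m%:R * gen m.+1 p q.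
Proof. exact: dzb_gen. Qed.
Lemma op4 m p q : op o4 (gen m p q) = q%:R * gen m p q + m%:R * gen m.+1 p q.+1.
Proof. case: q => [|q]; rewrite /op /= dzb_gen /gen /= !exprS; ring. Qed.
Lemma op5 m p q : op o5 (gen m p q) = q%:R * gen m p q.+1 + m%:R * gen m.+1 p q.+2.
Proof. case: q => [|q]; rewrite /op /= dzb_gen /gen /= !exprS; ring. Qed.

End S4.

Section S5.
Variable F : numClosedFieldType.
Local Notation Pol := (Pol F).
Local Notation RF := (RF F).
Local Notation zR := (zR F).
Local Notation zbR := (zbR F).
Local Notation gen := (gen F).

Lemma inA0 : inA (0 : RF).
Proof. by exists [::]; rewrite big_nil. Qed.

Lemma inAD (f g : RF) : inA f -> inA g -> inA (f + g).
Proof.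
move=> [s1 [h1 ->]] [s2 [h2 ->]]; exists (s1 ++ s2).
by rewrite all_cat h1 h2 big_cat.
Qed.

Lemma inAZ (c : F) (f : RF) : inA f -> inA (cst c * f).
Proof.
move=> [s [h ->]]; exists [seq (c * t.1, t.2) | t <- s]; split.
  by rewrite all_map.
rewrite big_map mulr_sumr; apply: eq_bigr => t _ /=.
by rewrite cstM mulrA.
Qed.

Lemma inAN k (f : RF) : inA f -> inA (k%:R * f).
Proof. by move=> h; rewrite -cst_nat; apply: inAZ. Qed.

Lemma inAO (f : RF) : inA f -> inA (- f).
Proof. by move=> h; rewrite -mulN1r -cstN1; apply: inAZ. Qed.

Lemma inAB (f g : RF) : inA f -> inA g -> inA (f - g).
Proof. by move=> h1 h2; apply: inAD => //; apply: inAO. Qed.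

Lemma inA_gen n p q : Omega n p q -> inA (gen n p q).
Proof.
move=> h; exists [:: (1, (n, p, q))]; split; first by rewrite /= h.
by rewrite big_seq1 /= cst1 mul1r.
Qed.

Lemma inA_kgen k n p q : (k = 0%N \/ Omega n p q) -> inA (k%:R * gen n p q).
Proof.
case=> [->|h]; first by rewrite mul0r; exact: inA0.
by apply: inAN; apply: inA_gen.
Qed.

Lemma Dq_cstM d (Hd : isder d) (c : F) (f : RF) (hc : quot_deriv d (cst c) = 0) :
  quot_deriv d (cst c * f) = cst c * quot_deriv d f.
Proof. by rewrite (Dq_mul Hd) hc mul0r add0r. Qed.

Lemma I6_ind (P : 'I_6 -> Prop) : P o0 -> P o1 -> P o2 -> P o3 -> P o4 -> P o5 -> forall i, P i.
Proof.
move=> h0 h1 h2 h3 h4 h5 [[|[|[|[|[|[|i]]]]]] Hi].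
- by rewrite (_ : Ordinal Hi = o0) //; apply: val_inj.
- by rewrite (_ : Ordinal Hi = o1) //; apply: val_inj.
- by rewrite (_ : Ordinal Hi = o2) //; apply: val_inj.
- by rewrite (_ : Ordinal Hi = o3) //; apply: val_inj.
- by rewrite (_ : Ordinal Hi = o4) //; apply: val_inj.
- by rewrite (_ : Ordinal Hi = o5) //; apply: val_inj.
- by [].
Qed.

Lemma op_add i (f g : RF) : op i (f + g) = op i f + op i g.
Proof.
have hz := Dq_add (dzP_der F) f g; have hb := Dq_add (dzbP_der F) f g.
rewrite -/(dz _) -/(dz f) -/(dz g) in hz. rewrite -/(dzb _) -/(dzb f) -/(dzb g) in hb.
elim/I6_ind: i; rewrite /op /=.
- exact: hz.
- by rewrite hz mulrDr.
- by rewrite hz mulrDr.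
- exact: hb.
- by rewrite hb mulrDr.
- by rewrite hb mulrDr.
Qed.

Lemma op_cst i (c : F) (f : RF) : op i (cst c * f) = cst c * op i f.
Proof.
have hz := Dq_cstM (dzP_der F) f (dz_cst c).
have hb := Dq_cstM (dzbP_der F) f (dzb_cst c).
rewrite -/(dz _) -/(dz f) in hz. rewrite -/(dzb _) -/(dzb f) in hb.
elim/I6_ind: i; rewrite /op /=.
- exact: hz.
- by rewrite hz mulrCA.
- by rewrite hz mulrCA.
- exact: hb.
- by rewrite hb mulrCA.
- by rewrite hb mulrCA.
Qed.

Lemma op_0 i : op i (0 : RF) = 0.
Proof.
have hz := Dq0 (dzP_der F); have hb := Dq0 (dzbP_der F).
rewrite -/(dz _) in hz. rewrite -/(dzb _) in hb.
elim/I6_ind: i; rewrite /op /=.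
- exact: hz.
- by rewrite hz mulr0.
- by rewrite hz mulr0.
- exact: hb.
- by rewrite hb mulr0.
- by rewrite hb mulr0.
Qed.

Lemma op_sum i (s : seq (F * (nat * nat * nat))) :
  op i (\sum_(t <- s) cst t.1 * gen t.2.1.1 t.2.1.2 t.2.2) =
  \sum_(t <- s) cst t.1 * op i (gen t.2.1.1 t.2.1.2 t.2.2).
Proof.
elim: s => [|t s IH]; first by rewrite !big_nil op_0.
by rewrite !big_cons op_add op_cst IH.
Qed.

Lemma op_gen_inA i n p q : Omega n p q -> inA (op i (gen n p q)).
Proof.
move=> h; have := h; rewrite /Omega => /andP [hp /andP [hq hpq]].
elim/I6_ind: i.
- rewrite op0; apply: inAB; apply: inA_kgen; rewrite /Omega; case: p hp hpq {h} => [|p] hp hpq /=; lia.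
- rewrite op1; apply: inAB; apply: inA_kgen; rewrite /Omega; lia.
- rewrite op2.
  have -> : p%:R * gen n p.+1 q - n%:R * gen n.+1 p.+2 q =
     - ((n - p)%:R * gen n.+1 p.+2 q) - p%:R * gen n.+1 p.+1 q.+1.
    by rewrite genR natrB //; ring.
  apply: inAB; [apply: inAO|]; apply: inA_kgen; rewrite /Omega; lia.
- rewrite op3; apply: inAD; apply: inA_kgen; rewrite /Omega; case: q hq hpq {h} => [|q] hq hpq /=; lia.
- rewrite op4; apply: inAD; apply: inA_kgen; rewrite /Omega; lia.
- rewrite op5.
  have -> : q%:R * gen n p q.+1 + n%:R * gen n.+1 p q.+2 =
     q%:R * gen n.+1 p.+1 q.+1 + (n - q)%:R * gen n.+1 p q.+2.
    by rewrite genR natrB //; ring.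
  apply: inAD; apply: inA_kgen; rewrite /Omega; lia.
Qed.

Lemma partA i (f : RF) : inA f -> inA (op i f).
Proof.
move=> [s [h ->]]; rewrite op_sum.
elim: s h => [|t s IH] /=; first by rewrite big_nil => _; exact: inA0.
move=> /andP [ht hs]; rewrite big_cons; apply: inAD; last exact: IH.
by apply: inAZ; apply: op_gen_inA.
Qed.

End S5.

Section S6.
Variable F : numClosedFieldType.
Local Notation Pol := (Pol F).
Local Notation RF := (RF F).
Local Notation zR := (zR F).
Local Notation zbR := (zbR F).
Local Notation gen := (gen F).
Local Notation g0 := (1 / (zR - zbR)).
Local Notation S := (in_span_orbit g0).

Lemma g0E : g0 = gen 1 0 0.
Proof. by rewrite /gen !expr0 mulr1 expr1. Qed.

Lemma S0 : S 0.
Proof. by exists [::]; rewrite big_nil. Qed.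

Lemma SD f g : S f -> S g -> S (f + g).
Proof. move=> [s1 ->] [s2 ->]; exists (s1 ++ s2); by rewrite big_cat. Qed.

Lemma SZ (c : F) f : S f -> S (cst c * f).
Proof.
move=> [s ->]; exists [seq (c * t.1, t.2) | t <- s].
rewrite big_map mulr_sumr; apply: eq_bigr => t _ /=.
by rewrite cstM mulrA.
Qed.

Lemma op_sumg i (T : Type) (s : seq T) (a : T -> F) (h : T -> RF) :
  op i (\sum_(t <- s) cst (a t) * h t) = \sum_(t <- s) cst (a t) * op i (h t).
Proof.
elim: s => [|t s IH]; first by rewrite !big_nil op_0.
by rewrite !big_cons op_add op_cst IH.
Qed.

Lemma Sop i f : S f -> S (op i f).
Proof.
move=> [s ->]; exists [seq (t.1, i :: t.2) | t <- s].
rewrite big_map (op_sumg i s (fun t => t.1) (fun t => apply_word t.2 g0)).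
apply: eq_bigr => t _ /=.
by [].
Qed.

Lemma Sg : S g0.
Proof. by exists [:: ((1 : F), [::] : seq (ordinal 6))]; rewrite big_seq1 /apply_word /= cst1 !mul1r. Qed.

Lemma SN k f : S f -> S (k%:R * f).
Proof. move=> h; have -> : k%:R * f = cst k%:R * f by rewrite cst_nat. by apply: SZ. Qed.

Lemma SO f : S f -> S (- f).
Proof. move=> h; have -> : - f = cst (-1) * f by rewrite cstN1 mulN1r. by apply: SZ. Qed.

Lemma SB f g : S f -> S g -> S (f - g).
Proof. by move=> h1 h2; apply: SD => //; apply: SO. Qed.

Lemma Ssolve k t x : S x -> (0 < k)%N -> k%:R * t = x -> S t.
Proof.
move=> hx hk e.
have k0 : (k%:R : F) != 0 by rewrite pnatr_eq0 -lt0n.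
have -> : t = cst (k%:R^-1) * (k%:R * t).
  by rewrite mulrA -cst_nat -cstM mulVf // cst1 mul1r.
by rewrite e; apply: SZ.
Qed.

Lemma genI1 : gen 1 0 1 = gen 3 2 1 - 2%:R * gen 2 0 2 - gen 3 0 3.
Proof. exact: (gI1 (uR F)). Qed.
Lemma genI2 : gen 1 1 0 = gen 2 2 0 - gen 1 0 1 - gen 2 0 2.
Proof. exact: (gI2 (uR F)). Qed.

Lemma Sg100 : S (gen 1 0 0). Proof. rewrite -g0E; exact: Sg. Qed.

Lemma level1 p q : Omega 1 p q -> S (gen 1 p q).
Proof.
move=> h.
have S220 : S (gen 2 2 0).
  apply: (Ssolve (k := 1) (x := - op o2 (gen 1 0 0))) => //.
    by apply: SO; apply: Sop; exact: Sg100.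
  by rewrite op2; ring.
have S202 : S (gen 2 0 2).
  apply: (Ssolve (k := 1) (x := op o5 (gen 1 0 0))) => //.
    by apply: Sop; exact: Sg100.
  by rewrite op5; ring.
have S321 : S (gen 3 2 1).
  apply: (Ssolve (k := 2) (x := op o4 (gen 2 2 0))) => //.
    by apply: Sop.
  by rewrite op4; ring.
have S303 : S (gen 3 0 3).
  apply: (Ssolve (k := 2) (x := op o4 (gen 2 0 2) - 2%:R * gen 2 0 2)) => //.
    by apply: SB; [apply: Sop | apply: SN].
  by rewrite op4; ring.
have S101 : S (gen 1 0 1).
  by rewrite genI1; apply: SB; [apply: SB => //; apply: SN|].
have S110 : S (gen 1 1 0).
  by rewrite genI2; apply: SB => //; apply: SB.
have : ((p == 0) && (q == 0)) || ((p == 1) && (q == 0)) || ((p == 0) && (q == 1)).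
  by move: h; rewrite /Omega; lia.
by case/orP => [/orP [] | ] /andP [/eqP -> /eqP ->]; [exact: Sg100 | |].
Qed.

End S6.

Section S7.
Variable F : numClosedFieldType.
Local Notation Pol := (Pol F).
Local Notation RF := (RF F).
Local Notation zR := (zR F).
Local Notation zbR := (zbR F).
Local Notation gen := (gen F).
Local Notation g0 := (1 / (zR - zbR)).
Local Notation S := (in_span_orbit g0).

Lemma key n : forall p q, Omega n p q -> S (gen n p q).
Proof.
elim: n => [|n IH] p q h.
  by exfalso; move: h; rewrite /Omega; lia.
case: n IH h => [|k] IH h; first exact: level1.
have [hA|[hB|[hC|[hD|[hE|hF]]]]] :
  ((p <= k.+1)%N /\ (q <= k.+1)%N /\ ~ (p = k.+1 /\ q = k.+1)) \/
  (p = k.+2 /\ (q <= k)%N) \/ (p = k.+2 /\ q = k.+1) \/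
  (q = k.+2 /\ (p <= k)%N) \/ (q = k.+2 /\ p = k.+1) \/ (p = k.+1 /\ q = k.+1).
- by move: h; rewrite /Omega; lia.
- case: hA => hp [hq hpq].
  apply: (Ssolve (k := k.+1) (x := p%:R * gen k.+1 p.-1 q - op o0 (gen k.+1 p q))) => //.
    apply: SB; last by apply: Sop; apply: IH; rewrite /Omega; lia.
    clear h; case: p hp hpq => [|p] hp hpq; first by rewrite mul0r; exact: S0.
    by apply: SN; apply: IH; rewrite /Omega /=; lia.
  by rewrite op0; ring.
- case: hB => -> hq.
  apply: (Ssolve (k := k.+1) (x := k.+1%:R * gen k.+1 k.+1 q - op o1 (gen k.+1 k.+1 q))) => //.
    by apply: SB; [apply: SN|apply: Sop]; apply: IH; rewrite /Omega; lia.
  by rewrite op1; ring.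
- case: hC => -> ->.
  apply: (Ssolve (k := k.+1) (x := - op o2 (gen k.+1 k.+1 k))) => //.
    by apply: SO; apply: Sop; apply: IH; rewrite /Omega; lia.
  by rewrite op2 (genR _ k.+1 k.+2 k); ring.
- case: hD => -> hp.
  apply: (Ssolve (k := k.+1) (x := op o4 (gen k.+1 p k.+1) - k.+1%:R * gen k.+1 p k.+1)) => //.
    by apply: SB; [apply: Sop|apply: SN]; apply: IH; rewrite /Omega; lia.
  by rewrite op4; ring.
- case: hE => -> ->.
  apply: (Ssolve (k := k.+1) (x := op o5 (gen k.+1 k k.+1))) => //.
    by apply: Sop; apply: IH; rewrite /Omega; lia.
  by rewrite op5 (genR _ k.+1 k k.+2); ring.
- case: hF => -> ->.
  apply: (Ssolve (k := k.+1) (x := k%:R * gen k.+1 k k.+1 - op o1 (gen k.+1 k k.+1))) => //.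
    by apply: SB; [apply: SN|apply: Sop]; apply: IH; rewrite /Omega; lia.
  by rewrite op1; ring.
Qed.

Lemma word_inA w : inA (apply_word w g0).
Proof.
elim: w => [|i w IH] /=.
  by rewrite g0E; apply: inA_gen.
by apply: partA.
Qed.

End S7.

Unset Implicit Arguments.

Theorem lemma1 (F : numClosedFieldType) :
  (forall (i : 'I_6) (f : RF F), inA f -> inA (op i f)) /\
  (forall f : RF F, in_span_orbit (1 / (zR F - zbR F)) f <-> inA f).
Proof.
split; first by move=> i f; apply: partA.
move=> f; split.
  move=> [s ->]; elim: s => [|t s IH]; first by rewrite big_nil; exact: inA0.
  by rewrite big_cons; apply: inAD => //; apply: inAZ; apply: word_inA.
move=> [s [h ->]]; elim: s h => [|t s IH] /=; first by rewrite big_nil => _; exact: S0.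
move=> /andP [ht hs]; rewrite big_cons; apply: SD; last exact: IH.
by apply: SZ; apply: key.
Qed.
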